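(* Let $X\in\mathbb{R}^{M\times N_f}$, $W\in\mathbb{R}^{N_f\times N_p}$, and $P_f=(W(XW)^+X)^T$. Then $P_f$ is an (oblique) projector, $P_f^2=P_f$, and for any singular value decomposition $P_f=\sum_{i:\sigma_i>0}\sigma_i\vec{f}_{X,i}\vec{f}_{W,i}^T$ (with $\{\vec{f}_{X,i}\}$ orthonormal, $\{\vec{f}_{W,i}\}$ orthonormal, $\sigma_i>0$) one has $\vec{f}_{W,i}\cdot\vec{f}_{X,j}=\delta_{ij}\cos\theta_i$ with $\cos\theta_i=1/\sigma_i$, so that $$P_f=\sum_i\frac{1}{\cos\theta_i}\vec{f}_{X,i}\vec{f}_{W,i}^T,$$ and all projection deviation angles satisfy $\delta\phi_i=0$.
   Context: $(XW)^+$ is the Moore–Penrose pseudoinverse. The subspace orientation angle $\theta_i\in[0,\pi]$ is defined by $\cos\theta_i=\vec{f}_{X,i}\cdot\vec{f}_{W,i}$. The projection deviation angle $\delta\phi_i$ is defined by $\cos(\pi/2-\delta\phi_i)=\frac{\vec{f}_{W,i}\cdot(\sigma_i\vec{f}_{X,i}-\vec{f}_{W,i})}{\|\sigma_i\vec{f}_{X,i}-\vec{f}_{W,i}\|}$; when $\sigma_i\vec{f}_{X,i}-\vec{f}_{W,i}=0$ (which happens when $\theta_i=0$) it is undefined and by convention taken to be $0$. *)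

(* Defs.v *)
From mathcomp Require Import all_boot all_order all_algebra.
From mathcomp Require Import all_classical all_reals all_analysis.
Set Implicit Arguments. Unset Strict Implicit. Unset Printing Implicit Defensive.
Import Order.TTheory GRing.Theory Num.Theory.
Local Open Scope ring_scope.

(* Moore–Penrose pseudoinverse, characterized by the four Penrose equations
   (it is the unique matrix satisfying them). *)
Definition is_MP_pinv {R : realType} {m n : nat}
  (A : 'M[R]_(m, n)) (B : 'M[R]_(n, m)) : Prop :=
  [/\ A *m B *m A = A, B *m A *m B = B,
      (A *m B)^T = A *m B & (B *m A)^T = B *m A].

Definition vdot {R : realType} {n : nat} (u v : 'cV[R]_n) : R :=
  \sum_(k < n) u k 0 * v k 0.
Definition vnorm {R : realType} {n : nat} (u : 'cV[R]_n) : R :=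
  Num.sqrt (vdot u u).

Definition orient_angle {R : realType} {n : nat} (fX fW : 'cV[R]_n) : R :=
  acos (vdot fX fW).

(* projection deviation angle delta_phi:
   cos (pi/2 - dphi) = fW . (s fX - fW) / || s fX - fW ||,
   i.e. dphi = pi/2 - acos(...); by convention 0 when s fX - fW = 0. *)
Definition proj_dev_angle {R : realType} {n : nat} (s : R) (fX fW : 'cV[R]_n) : R :=
  let d := s *: fX - fW in
  if d == 0 then 0 else pi / 2 - acos (vdot fW d / vnorm d).

(* Main.v *)
Require Import Defs.
From mathcomp Require Import all_boot all_order all_algebra.
From mathcomp Require Import all_classical all_reals all_analysis.
From mathcomp Require Import ring lra.
Import Order.TTheory GRing.Theory Num.Theory.
Local Open Scope ring_scope.

Lemma sum_diag (R : realType) n r (A B : 'M[R]_(n, r)) (s : 'I_r -> R) :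
  \sum_(i < r) s i *: (col i A *m (col i B)^T) = A *m diag_mx (\row_i s i) *m B^T.
Proof.
apply/matrixP => a b; rewrite mul_mx_diag summxE !mxE.
apply: eq_bigr => k _; rewrite !mxE big_ord1 !mxE.
by rewrite mulrA [s k * _]mulrC.
Qed.

Lemma vdotE (R : realType) n r (A B : 'M[R]_(n, r)) i j :
  vdot (col i A) (col j B) = (A^T *m B) i j.
Proof. by rewrite /vdot !mxE; apply: eq_bigr => k _; rewrite !mxE. Qed.

Lemma vdotC (R : realType) n (u v : 'cV[R]_n) : vdot u v = vdot v u.
Proof. by rewrite /vdot; apply: eq_bigr => k _; rewrite mulrC. Qed.

Theorem theorem5 (R : realType) (M Nf Np : nat)
  (X : 'M[R]_(M, Nf)) (W : 'M[R]_(Nf, Np)) (XWp : 'M[R]_(Np, M))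
  (hXWp : is_MP_pinv (X *m W) XWp) :
  let Pf := (W *m XWp *m X)^T in
  Pf *m Pf = Pf /\
  forall (r : nat) (FX FW : 'M[R]_(Nf, r)) (sigma : 'I_r -> R),
    (forall i, 0 < sigma i) ->
    FX^T *m FX = 1%:M ->
    FW^T *m FW = 1%:M ->
    Pf = \sum_(i < r) sigma i *: (col i FX *m (col i FW)^T) ->
    [/\ (forall i j : 'I_r, vdot (col i FW) (col j FX) =
           (if i == j then cos (orient_angle (col i FX) (col i FW)) else 0)),
        (forall i : 'I_r, cos (orient_angle (col i FX) (col i FW)) = 1 / sigma i),
        Pf = \sum_(i < r) (1 / cos (orient_angle (col i FX) (col i FW)))
                            *: (col i FX *m (col i FW)^T)
      & (forall i : 'I_r, proj_dev_angle (sigma i) (col i FX) (col i FW) = 0)].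
Proof.
move=> Pf.
have Pf2 : Pf *m Pf = Pf.
  rewrite /Pf -trmx_mul; congr trmx.
  case: hXWp => _ h2 _ _.
  by rewrite -[in RHS]h2 !mulmxA.
split => // r FX FW s hs hX hW hP0.
have hP := hP0; rewrite sum_diag in hP.
set D := diag_mx (\row_i s i) in hP.
have key : D *m (FW^T *m FX) *m D = D.
  have e := congr1 (fun A => FX^T *m A *m FW) Pf2.
  rewrite /= hP in e.
  have e1 : FX^T *m (FX *m D *m FW^T *m (FX *m D *m FW^T)) *m FW
     = (FX^T *m FX) *m D *m (FW^T *m FX) *m D *m (FW^T *m FW) by rewrite !mulmxA.
  have e2 : FX^T *m (FX *m D *m FW^T) *m FW
     = (FX^T *m FX) *m D *m (FW^T *m FW) by rewrite !mulmxA.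
  by move: e; rewrite e1 e2 hX hW !mul1mx !mulmx1.
have hG : forall i j, (FW^T *m FX) i j = if i == j then 1 / s i else 0.
  move=> i j; move/matrixP: key => /(_ i j).
  rewrite mul_mx_diag mul_diag_mx !mxE.
  have := hs i; have := hs j.
  case: eqP => [->|ne] hj hi e.
    rewrite mulr1n in e.
    apply: (mulfI (lt0r_neq0 hi)).
    rewrite div1r divff ?lt0r_neq0 //.
    by apply: (mulIf (lt0r_neq0 hi)); rewrite mul1r.
  rewrite mulr0n in e.
  move/eqP: e; rewrite !mulf_eq0 (negbTE (lt0r_neq0 hi)) (negbTE (lt0r_neq0 hj)) /= orbF.
  by move=> /eqP.
have hge : forall i, 1 / s i <= 1.
  move=> i.
  have h0 : 0 <= \sum_k (FX k i - FW k i) ^+ 2 by apply: sumr_ge0 => k _; exact: sqr_ge0.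
  have hexp : \sum_k (FX k i - FW k i) ^+ 2 =
     (FX^T *m FX) i i + (FW^T *m FW) i i - 2 * (FW^T *m FX) i i.
    rewrite !mxE mulr_sumr -big_split -sumrB /=; apply: eq_bigr => k _; rewrite !mxE.
    by rewrite expr2; ring.
  move: h0; rewrite hexp hX hW hG !mxE eqxx mulr1n => h.
  lra.
have hcos : forall i, cos (orient_angle (col i FX) (col i FW)) = 1 / s i.
  move=> i; rewrite /orient_angle vdotC vdotE hG eqxx acosK //.
  rewrite in_itv /=; apply/andP; split; last exact: hge.
  have := hs i => hi.
  have : 0 < 1 / s i by rewrite div1r invr_gt0.
  lra.
split.
- by move=> i j; rewrite vdotE hG; case: eqP => [->|//]; rewrite hcos.
- exact: hcos.
- by rewrite hP0; apply: eq_bigr => i _; rewrite hcos !div1r invrK.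
- move=> i; rewrite /proj_dev_angle; case: ifP => // _.
  have -> : vdot (col i FW) (s i *: col i FX - col i FW) =
     s i * vdot (col i FW) (col i FX) - vdot (col i FW) (col i FW).
    rewrite /vdot mulr_sumr -sumrB; apply: eq_bigr => k _; rewrite !mxE; ring.
  rewrite !vdotE hG hW !mxE eqxx mulr1n mul1r divff ?lt0r_neq0 // subrr mul0r acos0.
  by rewrite subrr.
Qed.
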